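(* Let $r$ be a prime power and $q=r^2$. If there exist linear codes $C_1$ and $C_2$ over $\mathbb{F}_q$ with parameters $[m,k_1,d_1]_q$ and $[m,k_2,d_2]_q$ such that $C_1\subseteq C_2^{\perp_H}$, then there exists a Hermitian self-orthogonal linear code over $\mathbb{F}_q$ with parameters $[2m,k_1+k_2,d]_q$ where $d\ge\min\{2d_1,d_2\}$.
   Context: For $a\in\mathbb{F}_q$, $\overline{a}:=a^r$. The Hermitian inner product on $\mathbb{F}_q^n$ is $\langle u,v\rangle_H=\sum_i u_i\overline{v_i}$, and $C^{\perp_H}=\{v:\langle u,v\rangle_H=0\ \forall u\in C\}$; $C$ is Hermitian self-orthogonal if $C\subseteq C^{\perp_H}$. A code with parameters $[n,k,d]_q$ is a linear code of length $n$, dimension $k$ and minimum Hamming weight $d$ over $\mathbb{F}_q$. *)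

(* Defs.v *)
From HB Require Import structures.
From mathcomp Require Import all_boot all_order all_algebra all_field.
Set Implicit Arguments. Unset Strict Implicit. Unset Printing Implicit Defensive.
Import GRing.Theory.
Local Open Scope ring_scope.

Definition prime_power (r : nat) : Prop :=
  exists p e : nat, prime p /\ (0 < e)%N /\ r = (p ^ e)%N.

(* Hermitian inner product <u,v>_H = sum_i u_i * conj(v_i), conj a = a^r *)
Definition hdot (F : finFieldType) (r m : nat) (u v : 'rV[F]_m) : F :=
  \sum_(i < m) u 0 i * (v 0 i) ^+ r.

Definition herm_dual (F : finFieldType) (r m : nat) (C : {vspace 'rV[F]_m})
  : {set 'rV[F]_m} :=
  [set v | [forall u, (u \in C) ==> (hdot r u v == 0)]].

Definition wt (F : finFieldType) (m : nat) (v : 'rV[F]_m) : nat :=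
  #|[set i : 'I_m | v 0 i != 0]|.

Definition min_dist (F : finFieldType) (m : nat) (C : {vspace 'rV[F]_m}) (d : nat)
  : Prop :=
  (exists2 c, c \in C & (c != 0) && (wt c == d)) /\
  (forall c, c \in C -> c != 0 -> (d <= wt c)%N).

(* C is a linear [n,k,d]_q code (n is the ambient length, fixed by the type) *)
Definition code_params (F : finFieldType) (m : nat) (C : {vspace 'rV[F]_m})
  (k d : nat) : Prop :=
  \dim C = k /\ min_dist C d.

Definition herm_self_orth (F : finFieldType) (r m : nat) (C : {vspace 'rV[F]_m})
  : Prop :=
  forall v, v \in C -> v \in herm_dual r C.

(* Main.v *)
From HB Require Import structures.
From mathcomp Require Import all_boot all_order all_algebra all_field all_fingroup all_solvable.
From mathcomp Require Import zify ring.
Require Import Defs.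
Set Implicit Arguments. Unset Strict Implicit. Unset Printing Implicit Defensive.
Import GRing.Theory.
Local Open Scope ring_scope.

Lemma hdot_row (F : finFieldType) r m (x y x' y' : 'rV[F]_m) :
  hdot r (row_mx x y) (row_mx x' y') = hdot r x x' + hdot r y y'.
Proof. by rewrite /hdot big_split_ord /=; congr (_ + _); apply: eq_bigr => i _; rewrite ?row_mxEl ?row_mxEr. Qed.

Lemma hdot_lin (F : finFieldType) r m (u v u' v' : 'rV[F]_m) al be ga de :
  (forall x y : F, (x + y) ^+ r = x ^+ r + y ^+ r) ->
  hdot r (al *: u + be *: v) (ga *: u' + de *: v') =
  al * ga ^+ r * hdot r u u' + al * de ^+ r * hdot r u v'
  + be * ga ^+ r * hdot r v u' + be * de ^+ r * hdot r v v'.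
Proof.
move=> frD; rewrite /hdot !mulr_sumr -!big_split /=; apply: eq_bigr => i _.
rewrite !mxE frD !exprMn; ring.
Qed.

Lemma hdot_sym (F : finFieldType) r m (u v : 'rV[F]_m) :
  (0 < r)%N ->
  (forall x y : F, (x + y) ^+ r = x ^+ r + y ^+ r) ->
  (forall x : F, (x ^+ r) ^+ r = x) ->
  hdot r u v = (hdot r v u) ^+ r.
Proof.
move=> r0 frD frr; rewrite /hdot (big_morph (fun x : F => x ^+ r) frD (id1 := 0)) ?expr0n ?gtn_eqF //.
by apply: eq_bigr => i _; rewrite exprMn frr mulrC.
Qed.

Lemma wtE (F : finFieldType) m (v : 'rV[F]_m) : wt v = (\sum_i ((v 0 i != 0)%R : nat))%N.
Proof.
rewrite /wt -sum1_card big_mkcond /=; apply: eq_bigr => i _.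
by rewrite inE; case: (v 0 i != 0).
Qed.

Lemma wt_row (F : finFieldType) m (x y : 'rV[F]_m) : wt (row_mx x y) = (wt x + wt y)%N.
Proof.
by rewrite !wtE big_split_ord /=; congr (_ + _)%N; apply: eq_bigr => i _; rewrite ?row_mxEl ?row_mxEr.
Qed.
Lemma exists_norms (F : finFieldType) (r : nat) : (1 < r)%N -> #|F| = (r ^ 2)%N ->
  (~~ odd r -> (1:F) + 1 = 0) ->
  exists a b : F, [/\ 1 + a * a ^+ r = 0, 1 + b * b ^+ r = 0 & a != b].
Proof.
move=> r1 cardF char2.
pose n := (r.-1 * r.+1)%N.
have nE : #|F| = n.+1 by rewrite cardF /n; lia.
have n0 : (0 < n)%N by rewrite /n; lia.
pose rs := enum [pred x : F | x != 0].
have : has n.-primitive_root rs.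
  apply: has_prim_root => //.
  - apply/allP => x; rewrite mem_enum inE => x0.
    rewrite unity_rootE; apply/eqP; apply: (mulfI x0).
    by rewrite mulr1 -exprS -nE expf_card.
  - exact: enum_uniq.
  - rewrite -cardE cardC1 nE //.
case/hasP => g _ gprim.
have gn : g ^+ n = 1 := prim_expr_order gprim.
have gpow i : (g ^+ i == 1) = (n %| i)%N by rewrite (prim_order_dvd gprim).
have y1 : g ^+ r.-1 != 1.
  rewrite gpow; apply/negP => d; have rp : (0 < r.-1)%N by lia.
  by move: (dvdn_leq rp d); rewrite /n; lia.
have yn : g ^+ r.-1 * (g ^+ r.-1) ^+ r = 1.
  by rewrite -exprM -exprD -gn; congr (_ ^+ _); rewrite /n; lia.
case: (boolP (odd r)) => rodd; last first.
  exists 1, (g ^+ r.-1); split.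
  - by rewrite expr1n mulr1 char2.
  - by rewrite yn char2.
  - by rewrite eq_sym.
pose h := (r.-1)./2.
have hE : r.-1 = h.*2.
  rewrite /h; have : ~~ odd r.-1 by move: rodd r1; clear; case: r => // r' /=; rewrite negbK.
  by move/even_halfK.
pose x := g ^+ (h * r.+1).
have x2 : x ^+ 2 = 1 by rewrite /x -exprM -gn; congr (_ ^+ _); rewrite /n hE; lia.
have xn1 : x != 1.
  rewrite /x gpow; apply/negP => d.
  have h0 : (0 < h)%N by move: rodd r1 hE; clear; lia.
  have rp : (0 < h * r.+1)%N by lia.
  by move: (dvdn_leq rp d); rewrite /n hE; lia.
have xm1 : 1 + x = 0.
  have : (x - 1) * (x + 1) = 0 by rewrite -subr_sqr x2 expr1n subrr.
  move/eqP; rewrite mulf_eq0 subr_eq0 (negbTE xn1) /= => /eqP.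
  by rewrite addrC.
have ax : g ^+ h * (g ^+ h) ^+ r = x by rewrite /x -exprM -exprD; congr (_ ^+ _); lia.
exists (g ^+ h), (g ^+ h * g ^+ r.-1); split.
- by rewrite ax.
- rewrite exprMn mulrACA ax yn mulr1 //.
- apply/negP => /eqP e.
  have a0 : g ^+ h != 0.
    apply/negP => /eqP a0; move: x2; rewrite -ax a0 mul0r expr0n /= => /eqP.
    by rewrite eq_sym oner_eq0.
  move: y1; rewrite -(inj_eq (mulfI a0)) mulr1 -e eqxx //.
Qed.

Lemma hd (F : finFieldType) r m (C : {vspace 'rV[F]_m}) v w :
  v \in herm_dual r C -> w \in C -> hdot r w v = 0.
Proof. by rewrite inE => /forallP /(_ w) /implyP H /H /eqP. Qed.

Lemma hdot_lin1 (F : finFieldType) r m (u v u' v' : 'rV[F]_m) :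
  (forall x y : F, (x + y) ^+ r = x ^+ r + y ^+ r) ->
  hdot r (u + v) (u' + v') =
  hdot r u u' + hdot r u v' + hdot r v u' + hdot r v v'.
Proof.
move=> frD; have := hdot_lin (r:=r) u v u' v' 1 1 1 1 frD.
by rewrite !scale1r expr1n !mul1r.
Qed.

Lemma main_mm (r : nat) (F : finFieldType) (m k1 k2 d1 d2 : nat)
  (C1 C2 : {vspace 'rV[F]_m}) :
  (0 < r)%N ->
  (forall x y : F, (x + y) ^+ r = x ^+ r + y ^+ r) ->
  (forall x : F, (x ^+ r) ^+ r = x) ->
  (exists a b : F, [/\ 1 + a * a ^+ r = 0, 1 + b * b ^+ r = 0 & a != b]) ->
  code_params C1 k1 d1 -> code_params C2 k2 d2 ->
  (forall v, v \in C1 -> v \in herm_dual r C2) ->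
  exists (C : {vspace 'rV[F]_(m + m)}) (d : nat),
    code_params C (k1 + k2) d /\ (minn (2 * d1) d2 <= d)%N /\
    herm_self_orth r C.
Proof.
move=> r0 frD frr [a [b [ha hb ab]]] [dC1 [[c1 c1C /andP [c1nz _]] md1]] [dC2 [_ md2]] H.
have a0 : a != 0 by apply/negP => /eqP a0; move: ha; rewrite a0 mul0r addr0 => /eqP; rewrite oner_eq0.
pose M1 : 'M[F]_(m, m + m) := row_mx 1%:M a%:M.
pose M2 : 'M[F]_(m, m + m) := row_mx 1%:M b%:M.
pose L1 := linfun (@mulmxr F 1 m (m + m) M1). pose L2 := linfun (@mulmxr F 1 m (m + m) M2).
have L1E (u : 'rV[F]_m) : L1 u = row_mx u (a *: u) by rewrite lfunE /= mul_mx_row mulmx1 mul_mx_scalar.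
have L2E (u : 'rV[F]_m) : L2 u = row_mx u (b *: u) by rewrite lfunE /= mul_mx_row mulmx1 mul_mx_scalar.
pose C := (L1 @: C1 + L2 @: C2)%VS.
have memC x : x \in C -> exists2 u, u \in C1 & exists2 v, v \in C2 & x = row_mx (u + v) (a *: u + b *: v).
  case/memv_addP => y /memv_imgP [u uC ->] [z /memv_imgP [v vC ->] ->].
  by exists u => //; exists v => //; rewrite L1E L2E add_row_mx.
have inj1 : lker L1 == 0%VS.
  by apply/lker0P => u u'; rewrite !L1E => /eq_row_mx [].
have inj2 : lker L2 == 0%VS.
  by apply/lker0P => u u'; rewrite !L2E => /eq_row_mx [].
have dimC : \dim C = (k1 + k2)%N.
  rewrite dimv_disjoint_sum ?limg_dim_eq ?(eqP inj1) ?(eqP inj2) ?capv0 -?dC1 -?dC2 //.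
  apply/eqP; rewrite -subv0; apply/subvP => x; rewrite memv_cap => /andP [/memv_imgP [u _ ->] /memv_imgP [v _ e]].
  rewrite memv0; move: e; rewrite L1E L2E => /eq_row_mx [<- e2].
  have : (a - b) *: u = 0 by rewrite scalerBl e2 subrr.
  move/eqP; rewrite scaler_eq0 subr_eq0 (negbTE ab) /= => /eqP ->.
  by apply/eqP; rewrite scaler0; apply: row_mx0.
have x0C : L1 c1 \in C by apply: (subvP (addvSl _ _)); apply: memv_img.
have x0nz : L1 c1 != 0.
  by rewrite L1E; apply/negP => /eqP; rewrite -row_mx0 => /eq_row_mx [e _]; move: c1nz; rewrite e eqxx.
have x0P : (L1 c1 \in C) && (L1 c1 != 0) by rewrite x0C x0nz.
case: (@arg_minnP _ (L1 c1) [pred c | (c \in C) && (c != 0)] (@wt F (m + m)) x0P) => c /andP [cC cnz] cmin.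
exists C, (wt c); split; [split => //|split].
- split; first by exists c => //; rewrite cnz eqxx.
  by move=> c' c'C c'nz; apply: cmin; rewrite /= c'C c'nz.
- have [u uC [v vC e]] := memC c cC.
  have [v0|vnz] := eqVneq v 0.
    move: e cnz; rewrite v0 addr0 scaler0 addr0 => -> cnz.
    have unz : u != 0 by apply/negP => /eqP u0; move: cnz; rewrite u0 scaler0 row_mx0 eqxx.
    rewrite wt_row.
    have -> : wt (a *: u) = wt u by rewrite !wtE; apply: eq_bigr => i _; rewrite mxE mulf_eq0 (negbTE a0).
    have h := md1 u uC unz; apply: leq_trans (geq_minl _ _) _; rewrite mul2n -addnn; exact: leq_add.
  have := md2 v vC vnz.
  have : (wt v <= wt c)%N.
    rewrite e wt_row !wtE -big_split /=; apply: leq_sum => i _; rewrite !mxE.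
    have [->|vi] := eqVneq (v 0 i) 0 => //.
    have [e1|] := eqVneq (u 0 i + v 0 i) 0 => //.
    have -> : u 0 i = - v 0 i by apply/eqP; rewrite -addr_eq0 e1.
    rewrite mulrN addrC -mulrBl mulf_eq0 subr_eq0 eq_sym (negbTE ab) (negbTE vi) //.
  by move=> h1 h2; apply: leq_trans (geq_minr _ _) (leq_trans h2 h1).
- move=> x xC; rewrite inE; apply/forallP => y; apply/implyP => yC.
  have [u' u'C [v' v'C ->]] := memC x xC.
  have [u uC [v vC ->]] := memC y yC.
  rewrite hdot_row hdot_lin1 // hdot_lin //.
  have h1 : hdot r u v' = 0 by rewrite (hdot_sym _ _ r0 frD frr) (hd (H u uC) v'C) expr0n gtn_eqF.
  have h2 : hdot r v u' = 0 by rewrite (hd (H u' u'C) vC).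
  rewrite h1 h2; apply/eqP.
  transitivity (hdot r u u' * (1 + a * a ^+ r) + hdot r v v' * (1 + b * b ^+ r)); first ring.
  by rewrite ha hb; ring.
Qed.

Theorem corollary4p3 (r : nat) (F : finFieldType) (m k1 k2 d1 d2 : nat)
  (C1 C2 : {vspace 'rV[F]_m}) :
  prime_power r -> #|F| = (r ^ 2)%N ->
  code_params C1 k1 d1 -> code_params C2 k2 d2 ->
  (forall v, v \in C1 -> v \in herm_dual r C2) ->
  exists (C : {vspace 'rV[F]_(2 * m)}) (d : nat),
    code_params C (k1 + k2) d /\ (minn (2 * d1) d2 <= d)%N /\
    herm_self_orth r C.
Proof.
move=> [p [e [pp [e0 re]]]] cardF P1 P2 H.
have p1 : (1 < p)%N := prime_gt1 pp.
have r1 : (1 < r)%N by rewrite re -(exp1n e) ltn_exp2r.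
have pch : p \in [pchar F] by apply: (@card_finPcharP F p (e * 2)) => //; rewrite cardF re expnM.
have frD (x y : F) : (x + y) ^+ r = x ^+ r + y ^+ r.
  by apply: exprDn_pchar; rewrite re pnatX pnatE // pch.
have frr (x : F) : (x ^+ r) ^+ r = x by rewrite -exprM -[in RHS](expf_card x) cardF expnS expn1.
have char2 : ~~ odd r -> (1 : F) + 1 = 0.
  rewrite re oddX negb_or (gtn_eqF e0) /= => pe.
  have p2 : p = 2%N by case: (even_prime pp) => // po; rewrite po in pe.
  by move: (pcharf0 pch); rewrite p2.
rewrite mul2n -addnn; apply: (main_mm _ _ _ _ P1 P2 H) => //; first lia.
exact: exists_norms.
Qed.
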